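(* Let $\mathbb{K}$ be a field and $R=\mathbb{K}\langle x,y\rangle/(xy-1)$. Every left ideal of $R$ is of the form $\Sigma\oplus Rp(x)$, where $p(x)\in\mathbb{K}[x]\subseteq R$ is a polynomial in $x$ and $\Sigma$ is a left ideal of $R$ contained in the socle $I$ of $R$.
   Context: $R$ has $\mathbb{K}$-basis $\{y^ix^j: i,j\ge 0\}$. The socle of $R$ (as a left module) is the two-sided ideal $I=\langle 1-yx\rangle$; it equals $\bigoplus_{n\ge1}S_n$ where $S_n=Rf_n$ with $f_n=y^{n-1}x^{n-1}-y^nx^n$, and each $S_n$ is a simple left $R$-module isomorphic to $S_1$. *)

(* Defs.v *)
From HB Require Import structures.
From mathcomp Require Import all_boot all_order all_algebra.
Set Implicit Arguments. Unset Strict Implicit. Unset Printing Implicit Defensive.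
Import GRing.Theory.
Local Open Scope ring_scope.

Section Jacobson.
Variables (K : fieldType) (A : algType K).

Definition yx_monomials_basis (x y : A) : Prop :=
  (forall a : A, exists (n : nat) (c : nat -> nat -> K),
      a = \sum_(i < n) \sum_(j < n) c i j *: (y ^+ i * x ^+ j)) /\
  (forall (n : nat) (c : nat -> nat -> K),
      \sum_(i < n) \sum_(j < n) c i j *: (y ^+ i * x ^+ j) = 0 ->
      forall i j, (i < n)%N -> (j < n)%N -> c i j = 0).

(* A is (isomorphic to) K<x,y>/(xy - 1), presented via generators x, y. *)
Definition jacobson_algebra (x y : A) : Prop :=
  x * y = 1 /\ yx_monomials_basis x y.

Definition left_ideal (L : A -> Prop) : Prop :=
  L 0 /\ (forall a b, L a -> L b -> L (a + b)) /\ (forall r a, L a -> L (r * a)).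

Definition socle_ideal (x y : A) (z : A) : Prop :=
  exists s : seq (A * A), z = \sum_(ab <- s) (ab.1 * (1 - y * x) * ab.2).

Definition poly_at (p : {poly K}) (x : A) : A :=
  \sum_(i < size p) p`_i *: x ^+ i.

Definition direct_sum_with_principal (L S : A -> Prop) (q : A) : Prop :=
  (forall a, L a <-> exists s r, S s /\ a = s + r * q) /\
  (forall r, S (r * q) -> r * q = 0).

End Jacobson.

(* Main.v *)
Require Import Defs.
From mathcomp Require Import all_boot all_order all_algebra.
From Stdlib Require Import Classical.
From mathcomp Require Import zify.
Set Implicit Arguments. Unset Strict Implicit. Unset Printing Implicit Defensive.
Import GRing.Theory.
Local Open Scope ring_scope.

Section S.
Variables (K : fieldType) (A : algType K).

Lemma poly_at_wide (p : {poly K}) (x : A) n : (size p <= n)%N ->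
  horner_alg x p = \sum_(i < n) p`_i *: x ^+ i.
Proof.
move=> hn; rewrite /horner_alg /horner_morph (@horner_coef_wide _ n).
  by apply: eq_bigr => i _; rewrite coef_map /= mulr_algl.
by rewrite size_map_poly.
Qed.

Lemma poly_atE (p : {poly K}) (x : A) : poly_at p x = horner_alg x p.
Proof. by rewrite (@poly_at_wide _ _ (size p)). Qed.

Lemma PX (x : A) n : horner_alg x 'X^n = x ^+ n.
Proof. by rewrite rmorphXn /= horner_algX. Qed.
Lemma PZ (x : A) c p : horner_alg x (c *: p) = c *: horner_alg x p.
Proof. by rewrite linearZ /= mulr_algl. Qed.
Lemma PD (x : A) p q : horner_alg x (p + q) = horner_alg x p + horner_alg x q.
Proof. by rewrite rmorphD. Qed.
Lemma PB (x : A) p q : horner_alg x (p - q) = horner_alg x p - horner_alg x q.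
Proof. by rewrite rmorphB. Qed.
Lemma PM (x : A) p q : horner_alg x (p * q) = horner_alg x p * horner_alg x q.
Proof. by rewrite rmorphM. Qed.
Lemma P0 (x : A) : horner_alg x 0 = 0.
Proof. by rewrite rmorph0. Qed.

Lemma min_size_ex (Q : {poly K} -> Prop) : (exists f, Q f) ->
  exists f, Q f /\ forall g, Q g -> (size f <= size g)%N.
Proof.
case=> f Qf.
suff H : forall m (f : {poly K}), (size f <= m)%N -> Q f ->
  exists f1 : {poly K}, Q f1 /\ forall g, Q g -> (size f1 <= size g)%N by exact: (H _ f (leqnn _)).
elim=> [|m IH] {}f hf {}Qf.
  exists f; split=> // g _; by rewrite (leq_trans hf).
case: (classic (exists g, Q g /\ (size g < size f)%N)) => [[g [Qg lt]]|H].
  apply: (IH g) => //; by rewrite -ltnS (leq_trans lt).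
exists f; split=> // g Qg; rewrite leqNgt; apply/negP => lt; apply: H; by exists g.
Qed.

Variables (x y : A).
Hypothesis hxy : x * y = 1.
Hypothesis hspan : forall a : A, exists (n : nat) (c : nat -> nat -> K),
      a = \sum_(i < n) \sum_(j < n) c i j *: (y ^+ i * x ^+ j).
Hypothesis hind : forall (n : nat) (c : nat -> nat -> K),
      \sum_(i < n) \sum_(j < n) c i j *: (y ^+ i * x ^+ j) = 0 ->
      forall i j, (i < n)%N -> (j < n)%N -> c i j = 0.

Local Notation e := (1 - y * x).
Local Notation P := (horner_alg x).

Lemma xe : x * e = 0.
Proof. by rewrite mulrBr mulr1 mulrA hxy mul1r subrr. Qed.
Lemma ey : e * y = 0.
Proof. by rewrite mulrBl mul1r -mulrA hxy mulr1 subrr. Qed.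
Lemma ee : e * e = e.
Proof. by rewrite {1}mulrBl mul1r -mulrA xe mulr0 subr0. Qed.
Lemma xnyn n : x ^+ n * y ^+ n = 1.
Proof. elim: n => [|n IH]; first by rewrite !expr0 mulr1.
by rewrite exprSr exprS mulrA -(mulrA _ x) hxy mulr1. Qed.
Lemma xny n i : (i <= n)%N -> x ^+ n * y ^+ i = x ^+ (n - i).
Proof. move=> h; by rewrite -{1}(subnK h) exprD -mulrA xnyn mulr1. Qed.
Lemma xSe k : x ^+ k.+1 * e = 0.
Proof. by rewrite exprSr -mulrA xe mulr0. Qed.
Lemma eyS k : e * y ^+ k.+1 = 0.
Proof. by rewrite exprS mulrA ey mul0r. Qed.
Lemma tele n : 1 - y ^+ n * x ^+ n = \sum_(k < n) y ^+ k * e * x ^+ k.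
Proof.
elim: n => [|n IH]; first by rewrite big_ord0 !expr0 mulr1 subrr.
rewrite big_ord_recr /= -IH exprSr exprS.
rewrite mulrBr mulr1 mulrBl !mulrA.
by rewrite addrA subrK.
Qed.

Lemma xpol a : exists n f, x ^+ n * a = P f.
Proof.
have [n [c ->]] := hspan a.
exists n, (\sum_(i < n) \sum_(j < n) c i j *: 'X^(n - i + j)).
rewrite linear_sum mulr_sumr; apply: eq_bigr => i _.
rewrite linear_sum mulr_sumr; apply: eq_bigr => j _.
by rewrite linearZ /= rmorphXn /= horner_algX -scalerAr mulrA xny ?(ltnW (ltn_ord i)) // -exprD mulr_algl.
Qed.

Lemma epol a : exists f, e * a = e * P f.
Proof.
have [n [c ->]] := hspan a.
exists (\sum_(i < n) \sum_(j < n) (((i : nat) == 0%N)%:R * c i j) *: 'X^j).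
rewrite linear_sum !mulr_sumr; apply: eq_bigr => i _.
rewrite linear_sum !mulr_sumr; apply: eq_bigr => j _.
rewrite linearZ /= rmorphXn /= horner_algX mulr_algl -!scalerAr.
case: i => [[|i]] hi /=; first by rewrite expr0 !mul1r.
by rewrite mulrA eyS mul0r mul0r scale0r scaler0.
Qed.

Lemma xae a : exists N, x ^+ N * a * e = 0.
Proof.
have [n [c ->]] := hspan a.
exists n; rewrite mulr_sumr mulr_suml big1 // => i _.
rewrite mulr_sumr mulr_suml big1 // => j _.
rewrite -scalerAr -scalerAl mulrA xny ?(ltnW (ltn_ord i)) // -exprD.
have hi := ltn_ord i.
have -> : (n - i + j = (n - i.+1 + j).+1)%N by lia.
by rewrite xSe scaler0.
Qed.

Lemma pe f : P f * e = f`_0 *: e.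
Proof.
rewrite (@poly_at_wide _ x _ (leqnSn (size f))) big_ord_recl mulrDl mulr_suml big1 ?addr0.
  by rewrite -scalerAl expr0 mul1r.
by move=> i _; rewrite lift0 -scalerAl xSe scaler0.
Qed.

Lemma epol0 f : e * P f = 0 -> f = 0.
Proof.
move=> H.
pose n := (size f).+2.
pose c := fun i j : nat => if i == 0%N then f`_j else if i == 1%N then
   (match j with 0%N => 0 | j'.+1 => - f`_j' end) else 0.
have Hs : \sum_(i < n) \sum_(j < n) c i j *: (y ^+ i * x ^+ j) = 0.
  transitivity (e * P f); last exact: H.
  rewrite (big_ord_recl (size f).+1) (big_ord_recl (size f)).
  rewrite [X in _ + (_ + X)]big1 ?addr0; last first.
    by move=> i _; apply: big1 => j _; rewrite /c !lift0 /= scale0r.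
  have E1 : \sum_(j < n) c (@ord0 (size f).+1) j *: (y ^+ 0 * x ^+ j) = P f.
    rewrite (@poly_at_wide _ x _ (leq_trans (leqnSn _) (leqnSn (size f).+1))).
    by apply: eq_bigr => j _; rewrite expr0 mul1r.
  rewrite E1 mulrBl mul1r; congr (_ + _).
  rewrite big_ord_recl /= scale0r add0r.
  rewrite (@poly_at_wide _ x _ (leqnSn (size f))) mulr_sumr -sumrN.
  apply: eq_bigr => j _; rewrite /bump /= /c /= add1n expr1 scaleNr -scalerAr add0n add1n exprS mulrA.
  by [].
move=> {H}; apply/polyP => j; rewrite coef0.
case: (ltnP j n) => hj.
  by have := hind Hs (i:=0) (j:=j) isT hj.
by rewrite nth_default // (leq_trans _ hj) // leqW.
Qed.


Lemma ewsum b n (a : nat -> A) : exists w : {poly K}, (size w <= n)%N /\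
  e * (b * \sum_(k < n) a k * e * x ^+ k) = e * P w.
Proof.
elim: n => [|n [w [hw E]]].
  by exists 0; rewrite big_ord0 size_poly0 rmorph0 !mulr0.
have [h hh] := epol (b * a n).
exists (w + h`_0 *: 'X^n); split.
  apply: (leq_trans (size_add _ _)); rewrite geq_max (leq_trans hw) //=.
  by apply: (leq_trans (size_scale_leq _ _)); rewrite size_polyXn.
rewrite big_ord_recr /= (mulrDr b) (mulrDr e) E PD PZ PX (mulrDr e (P w)).
congr (_ + _).
have -> : e * (b * (a n * e * x ^+ n)) = e * (b * a n) * e * x ^+ n by rewrite !mulrA.
by rewrite hh -(mulrA e) pe -scalerAr ee -scalerAr -scalerAl.
Qed.

Lemma xsum n (a : nat -> A) : exists N, x ^+ N * \sum_(k < n) a k * e * x ^+ k = 0.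
Proof.
elim: n => [|n [N1 h1]]; first by exists 0%N; rewrite big_ord0 mulr0.
have [N2 h2] := xae (a n).
exists (N1 + N2)%N; rewrite big_ord_recr /= mulrDr.
have -> : x ^+ (N1 + N2) * \sum_(i < n) a i * e * x ^+ i =
   x ^+ N2 * (x ^+ N1 * \sum_(i < n) a i * e * x ^+ i) by rewrite addnC exprD mulrA.
have -> : x ^+ (N1 + N2) * (a n * e * x ^+ n) = x ^+ N1 * (x ^+ N2 * a n * e) * x ^+ n
   by rewrite exprD !mulrA.
by rewrite h1 h2 !mulr0 mul0r addr0.
Qed.

Definition Td (p : {poly K}) (z : A) :=
  exists r : nat -> A, z = \sum_(k < (size p).-1) r k * e * x ^+ k.

Lemma direct (p : {poly K}) r : p != 0 -> Td p (r * P p) -> r * P p = 0.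
Proof.
move=> hp [a ha].
set z := r * P p in ha *.
have HA : forall i, e * (x ^+ i * z) = 0.
  move=> i.
  have [h hh] := epol (x ^+ i * r).
  have [w [hw hw']] := ewsum (x ^+ i) (size p).-1 a.
  have Ez : e * (x ^+ i * z) = e * P (h * p).
    by rewrite /z PM !mulrA -(mulrA e) hh.
  have E : e * P (h * p - w) = 0.
    by rewrite rmorphB /= mulrBr -Ez -hw' -ha subrr.
  have := epol0 E => /eqP; rewrite subr_eq0 => /eqP hpw.
  case: (eqVneq (h * p) 0) => hz; first by rewrite Ez hz rmorph0 mulr0.
  have := dvdp_leq hz (dvdp_mull h (dvdpp p)).
  rewrite hpw => hle; have := leq_trans hle hw.
  have : (0 < size p)%N by rewrite size_poly_gt0.
  by move=> h1; rewrite -ltnS prednK // ltnn.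
have [N hN] := xsum (size p).-1 a.
rewrite -ha in hN.
have -> : z = (1 - y ^+ N * x ^+ N) * z + y ^+ N * (x ^+ N * z)
  by rewrite mulrBl mul1r mulrA subrK.
rewrite hN mulr0 addr0 tele mulr_suml big1 // => k _.
by rewrite -!mulrA HA mulr0.
Qed.

Lemma socle_sum n (F G : nat -> A) :
  socle_ideal x y (\sum_(k < n) F k * e * G k).
Proof.
exists [seq (F k, G k) | k <- iota 0 n].
rewrite big_map /=. rewrite -(big_mkord xpredT (fun k => F k * e * G k)) /index_iota subn0 /=. by [].
Qed.


Lemma Td0 p : Td p 0.
Proof. by exists (fun _ => 0); rewrite big1 // => k _; rewrite !mul0r. Qed.
Lemma TdD p a b : Td p a -> Td p b -> Td p (a + b).
Proof.
move=> [ra ->] [rb ->]; exists (fun k => ra k + rb k).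
by rewrite -big_split /=; apply: eq_bigr => k _; rewrite !mulrDl.
Qed.
Lemma TdM p c a : Td p a -> Td p (c * a).
Proof.
move=> [ra ->]; exists (fun k => c * ra k).
by rewrite mulr_sumr; apply: eq_bigr => k _; rewrite !mulrA.
Qed.

Definition Dec p z := exists q t, Td p t /\ z = q * P p + t.

Lemma dec_sum p (I : Type) (s : seq I) (Pr : pred I) (F : I -> A) :
  (forall i, Dec p (F i)) -> Dec p (\sum_(i <- s | Pr i) F i).
Proof.
move=> H; apply: big_ind => //.
  by exists 0, 0; split; [exact: Td0 | rewrite mul0r addr0].
move=> a b [q1 [t1 [h1 ->]]] [q2 [t2 [h2 ->]]].
exists (q1 + q2), (t1 + t2); split; first exact: TdD.
by rewrite mulrDl -!addrA; congr (_ + _); rewrite addrCA.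
Qed.

Lemma red p r b : p != 0 -> Dec p (r * e * b).
Proof.
move=> hp; have [f hf] := epol b.
have h : (size (f %% p)%R < size p)%N by rewrite ltn_modp.
have hs : (size (f %% p)%R <= (size p).-1)%N.
  by rewrite -ltnS prednK // (leq_ltn_trans (leq0n _) h).
exists (r * e * P (f %/ p)), (\sum_(k < (size p).-1) ((f %% p)`_k *: r) * e * x ^+ k).
split; first by exists (fun k => (f %% p)`_k *: r).
have Hf : P f = P (f %/ p) * P p + P (f %% p) by rewrite {1}(divp_eq f p) PD PM.
rewrite -mulrA hf Hf mulrDr mulrDr !mulrA (@poly_at_wide _ x _ hs) mulr_sumr.
congr (_ + _); apply: eq_bigr => k _.
by rewrite -scalerAr !scalerAl.
Qed.

Lemma main (L : A -> Prop) (hL : left_ideal L) :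
  exists (S : A -> Prop) (p : {poly K}),
    left_ideal S /\ (forall s, S s -> socle_ideal x y s) /\
    direct_sum_with_principal L S (poly_at p x).
Proof.
case: hL => L0 [LD LM].
have LN : forall a, L a -> L (- a) by move=> a ha; rewrite -mulN1r; apply: LM.
have LB : forall a b, L a -> L b -> L (a - b) by move=> a b ha hb; apply: LD => //; apply: LN.
have Ea : forall n a, a = (1 - y ^+ n * x ^+ n) * a + y ^+ n * (x ^+ n * a)
  by move=> n a; rewrite mulrBl mul1r mulrA subrK.
case: (classic (exists f : {poly K}, f != 0 /\ L (P f))) => [Hex|Hno].
- have [p [[hp hpL] hmin]] := min_size_ex Hex.
  have hdiv : forall f, L (P f) -> f = (f %/ p) * p.
    move=> f hf.
    have hr : L (P (f %% p)).
      have -> : f %% p = f - (f %/ p) * p by rewrite {2}(divp_eq f p) addrAC subrr add0r.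
      by rewrite PB PM; apply: LB => //; apply: LM.
    case: (eqVneq (f %% p) 0) => h0; first by rewrite {1}(divp_eq f p) h0 addr0.
    have := hmin _ (conj h0 hr); rewrite leqNgt ltn_modp hp; by [].
  exists (fun z => L z /\ Td p z), p; rewrite poly_atE.
  split; [|split].
  + split; first by split; [exact: L0 | exact: Td0].
    split.
      move=> a b [ha ta] [hb tb]; split; [exact: LD | exact: TdD].
    move=> r a [ha ta]; split; [exact: LM | exact: TdM].
  + by move=> s [_ [r ->]]; exact: socle_sum.
  + split; last by move=> r [_ hT]; exact: direct hp hT.
    move=> a; split; last first.
      by move=> [s [r [[hs _] ->]]]; apply: LD => //; apply: LM.
    move=> ha.
    have [n [f hf]] := xpol a.
    have hfL : L (P f) by rewrite -hf; apply: LM.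
    have Hf := hdiv f hfL.
    set g := f %/ p in Hf.
    have hdec : Dec p ((1 - y ^+ n * x ^+ n) * a).
      rewrite tele mulr_suml; apply: dec_sum => k.
      by rewrite -(mulrA (y ^+ k * e)); apply: red.
    have [q [t [ht Et]]] := hdec.
    exists t, (q + y ^+ n * P g); split.
      split => //.
      have -> : t = (1 - y ^+ n * x ^+ n) * a - q * P p by rewrite Et addrC addKr.
      by apply: LB; apply: LM.
    rewrite {1}(Ea n a) Et hf Hf PM mulrDl !mulrA.
    by rewrite [q * P p + t]addrC -addrA.
- exists L, 0; rewrite poly_atE P0.
  split; [|split].
  + by split => //; split.
  + move=> a ha.
    have [n [f hf]] := xpol a.
    have hfL : L (P f) by rewrite -hf; apply: LM.
    have f0 : f = 0.
      case: (eqVneq f 0) => // fn0; exfalso; apply: Hno; by exists f.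
    rewrite (Ea n a) hf f0 P0 mulr0 addr0 tele mulr_suml.
    have -> : \sum_(k < n) y ^+ k * e * x ^+ k * a = \sum_(k < n) y ^+ k * e * (x ^+ k * a).
      by apply: eq_bigr => k _; rewrite mulrA.
    exact: (socle_sum n (fun k => y ^+ k) (fun k => x ^+ k * a)).
  + split; last by move=> r _; rewrite mulr0.
    move=> a; split.
      by move=> ha; exists a, 0; rewrite mulr0 addr0.
    by move=> [s [r [hs ->]]]; rewrite mulr0 addr0.
Qed.
End S.

Theorem theorem2 (K : fieldType) (A : algType K) (x y : A)
    (hA : jacobson_algebra x y) (L : A -> Prop) (hL : left_ideal L) :
  exists (S : A -> Prop) (p : {poly K}),
    left_ideal S /\ (forall s, S s -> socle_ideal x y s) /\
    direct_sum_with_principal L S (poly_at p x).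
Proof.
case: hA => hxy [hspan hind].
exact: (main hxy hspan hind hL).
Qed.
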